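(* Let $s_1=M[-1,1,0,0]+M[-1,-1,1,0]+M[1,-1,1,1]$. Then for every $n\ge2$, $$x_ns_1=x_{n+1}+q\,x_{n-1}y_1y_2$$ in the quantum cluster algebra $\mathcal{A}_q(B,\Lambda)$ of Kronecker type.
   Context: Based quantum torus: basis $M[a]$, $a\in\mathbb{Z}^4$, $M[a]M[b]=q^{\frac12a^T\Lambda b}M[a+b]$, with $B=\begin{pmatrix}0&2\\-2&0\\1&0\\0&1\end{pmatrix}$, $\Lambda=\begin{pmatrix}0&0&-1&0\\0&0&0&-1\\1&0&0&-2\\0&1&2&0\end{pmatrix}$; $x_1=M[e_1],x_2=M[e_2],y_1=M[e_3],y_2=M[e_4]$. $\mathcal{A}_q(B,\Lambda)$ is the Berenstein–Zelevinsky quantum cluster algebra; quantum mutation at $k$ replaces $x'_k$ by $M_{\Lambda'}[-e_k+\sum_{b'_{ik}>0}b'_{ik}e_i]+M_{\Lambda'}[-e_k-\sum_{b'_{ik}<0}b'_{ik}e_i]$. For $m\ge0$, $x_{m+3}$ is the quantum cluster variable produced at the $(m+1)$-st step of mutating the initial seed successively at $1,2,1,2,\dots$; e.g. $x_3=M[-1,2,0,0]+M[-1,0,1,0]$. *)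

(* Defs.v *)
(* Based quantum torus T over Z[v,v^-1], v = q^{1/2}, with basis M[a], a in Z^4,
   and product M[a]M[b] = v^{a^T Lambda b} M[a+b] (Lambda = initial Lambda).   *)
From Stdlib Require Import ZArith List Bool.
Import ListNotations.
Open Scope Z_scope.

Definition vec : Type := (Z * Z * Z * Z)%type.

Definition vget (a : vec) (i : nat) : Z :=
  match a with (a0, a1, a2, a3) =>
    match i with 0%nat => a0 | 1%nat => a1 | 2%nat => a2 | 3%nat => a3 | _ => 0 end
  end.

Definition vadd (a b : vec) : vec :=
  match a, b with (a0,a1,a2,a3), (b0,b1,b2,b3) => (a0+b0, a1+b1, a2+b2, a3+b3) end.

Definition vec_of (f : nat -> Z) : vec := (f 0%nat, f 1%nat, f 2%nat, f 3%nat).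

Definition vunit (i : nat) : vec := vec_of (fun j => if Nat.eqb i j then 1 else 0).

Definition veqb (a b : vec) : bool :=
  match a, b with (a0,a1,a2,a3), (b0,b1,b2,b3) =>
    Z.eqb a0 b0 && Z.eqb a1 b1 && Z.eqb a2 b2 && Z.eqb a3 b3 end.

Definition sum4 (f : nat -> Z) : Z := f 0%nat + f 1%nat + f 2%nat + f 3%nat.

Definition bform (L : nat -> nat -> Z) (a b : vec) : Z :=
  sum4 (fun i => sum4 (fun j => vget a i * L i j * vget b j)).

(* the initial matrices (0-based indices) *)
Definition B0 (i j : nat) : Z :=
  match i, j with
  | 0%nat, 1%nat => 2
  | 1%nat, 0%nat => -2
  | 2%nat, 0%nat => 1
  | 3%nat, 1%nat => 1
  | _, _ => 0
  end.

Definition Lambda0 (i j : nat) : Z :=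
  match i, j with
  | 0%nat, 2%nat => -1
  | 1%nat, 3%nat => -1
  | 2%nat, 0%nat => 1
  | 2%nat, 3%nat => -2
  | 3%nat, 1%nat => 1
  | 3%nat, 2%nat => 2
  | _, _ => 0
  end.

(* a term (c, k, a) stands for c * v^k * M[a]; an element is a finite sum of terms *)
Definition term : Type := (Z * Z * vec)%type.
Definition tor : Type := list term.

Definition coeff (t : tor) (k : Z) (a : vec) : Z :=
  fold_right (fun (x : term) acc =>
     match x with (c, k', a') =>
       if Z.eqb k k' && veqb a a' then c + acc else acc end) 0 t.

Definition teq (t u : tor) : Prop := forall k a, coeff t k a = coeff u k a.

Definition tzero : tor := [].
Definition tadd (t u : tor) : tor := t ++ u.
Definition M (a : vec) : tor := [(1, 0, a)].
Definition tone : tor := M (0,0,0,0).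

(* multiplication by the central scalar v^j = q^{j/2} *)
Definition tscale (j : Z) (t : tor) : tor :=
  map (fun x : term => match x with (c, k, a) => (c, k + j, a) end) t.

Definition tmul (t u : tor) : tor :=
  flat_map (fun x : term => match x with (c1, k1, a) =>
     map (fun y : term => match y with (c2, k2, b) =>
        (c1 * c2, k1 + k2 + bform Lambda0 a b, vadd a b) end) u end) t.

Fixpoint tpow (t : tor) (n : nat) : tor :=
  match n with 0%nat => tone | S n' => tmul t (tpow t n') end.

(* mutation direction at step m (0-based: 0 stands for index 1, 1 for index 2) *)
Definition kidx (m : nat) : nat := if Nat.even m then 0%nat else 1%nat.

Definition mutB (k : nat) (B : nat -> nat -> Z) (i j : nat) : Z :=
  if Nat.eqb i k || Nat.eqb j k then - B i j
  else B i j + (Z.abs (B i k) * B k j + B i k * Z.abs (B k j)) / 2.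

(* Berenstein-Zelevinsky: Lambda' = E^T Lambda E, E = E_{+} for direction k *)
Definition Emat (k : nat) (B : nat -> nat -> Z) (i j : nat) : Z :=
  if Nat.eqb j k then (if Nat.eqb i k then -1 else Z.max 0 (- B i k))
  else (if Nat.eqb i j then 1 else 0).

Definition mutL (k : nat) (B L : nat -> nat -> Z) (i j : nat) : Z :=
  sum4 (fun a => sum4 (fun b => Emat k B a i * L a b * Emat k B b j)).

Fixpoint Bseq (m : nat) : nat -> nat -> Z :=
  match m with 0%nat => B0 | S m' => mutB (kidx m') (Bseq m') end.

Fixpoint Lseq (m : nat) : nat -> nat -> Z :=
  match m with 0%nat => Lambda0 | S m' => mutL (kidx m') (Bseq m') (Lseq m') end.

(* toric frame of a cluster X (X i, i < 4) with matrix L, at c with c_i >= 0: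
   M(c) = q^{-1/2 sum_{i<j} c_i c_j L_ij} X_0^{c_0} X_1^{c_1} X_2^{c_2} X_3^{c_3} *)
Definition frame (X : nat -> tor) (L : nat -> nat -> Z) (c : vec) : tor :=
  tscale (- sum4 (fun i => sum4 (fun j =>
              if Nat.ltb i j then vget c i * vget c j * L i j else 0)))
    (tmul (tpow (X 0%nat) (Z.to_nat (vget c 0)))
      (tmul (tpow (X 1%nat) (Z.to_nat (vget c 1)))
        (tmul (tpow (X 2%nat) (Z.to_nat (vget c 2)))
              (tpow (X 3%nat) (Z.to_nat (vget c 3)))))).

(* The new variable
     X'_k = M(-e_k + [b_k]_+) + M(-e_k + [-b_k]_+)
   (M the current toric frame) is characterised, in the (Ore) domain T, by
     X'_k X_k = v^{(v+)^T L e_k} M(v+) + v^{(v-)^T L e_k} M(v-),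
   since M(-e_k + w) M(e_k) = q^{1/2 w^T L e_k} M(w) for L skew-symmetric. *)
Definition exch_rhs (X : nat -> tor) (B L : nat -> nat -> Z) (k : nat) : tor :=
  let vp := vec_of (fun i => Z.max 0 (B i k)) in
  let vm := vec_of (fun i => Z.max 0 (- B i k)) in
  tadd (tscale (bform L vp (vunit k)) (frame X L vp))
       (tscale (bform L vm (vunit k)) (frame X L vm)).

(* S m i = i-th element (i < 4) of the extended cluster after m mutations *)
Definition valid_seq (X : nat -> nat -> tor) : Prop :=
  (forall i, (i < 4)%nat -> teq (X 0%nat i) (M (vunit i))) /\
  (forall m : nat,
     (forall i, (i < 4)%nat -> i <> kidx m -> teq (X (S m) i) (X m i)) /\
     teq (tmul (X (S m) (kidx m)) (X m (kidx m)))
         (exch_rhs (X m) (Bseq m) (Lseq m) (kidx m))).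

(* the cluster variables x_n, n >= 1:  x_1, x_2 initial, x_{m+3} produced at step m+1 *)
Definition xvar (X : nat -> nat -> tor) (n : nat) : tor :=
  match n with
  | 0%nat => tzero
  | 1%nat => X 0%nat 0%nat
  | 2%nat => X 0%nat 1%nat
  | S (S (S m)) => X (S m) (kidx m)
  end.

Definition y1 : tor := M (0,0,1,0).
Definition y2 : tor := M (0,0,0,1).

Definition s1 : tor :=
  tadd (M (-1,1,0,0)) (tadd (M (-1,-1,1,0)) (M (1,-1,1,1))).

(* Main.v *)
Require Import Defs.
From Stdlib Require Import ZArith List Bool Lia Setoid Morphisms Classical FunctionalExtensionality.
Import ListNotations.
Open Scope Z_scope.

Definition vsub (a b : vec) : vec :=
  match a, b with (a0,a1,a2,a3), (b0,b1,b2,b3) => (a0-b0, a1-b1, a2-b2, a3-b3) end.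

Lemma vec_eq (a0 a1 a2 a3 b0 b1 b2 b3 : Z) : a0 = b0 -> a1 = b1 -> a2 = b2 -> a3 = b3 ->
  ((a0, a1, a2, a3) : vec) = (b0, b1, b2, b3).
Proof. intros; subst; reflexivity. Qed.

Lemma veqb_spec a b : veqb a b = true <-> a = b.
Proof.
  destruct a as [[[a0 a1] a2] a3], b as [[[b0 b1] b2] b3]; simpl.
  rewrite !andb_true_iff, !Z.eqb_eq. split.
  - intros [[[-> ->] ->] ->]; auto.
  - intros H; inversion H; auto.
Qed.

Lemma veqb_refl a : veqb a a = true.
Proof. apply veqb_spec; auto. Qed.

Lemma vadd_vsub_iff a1 b a : vadd a1 b = a <-> vsub a a1 = b.
Proof.
  destruct a as [[[a0 x1] a2] a3], b as [[[b0 b1] b2] b3], a1 as [[[c0 c1] c2] c3]; simpl.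
  split; intros H; inversion H; subst; f_equal; try f_equal; try f_equal; lia.
Qed.

Lemma vadd_vsub_iff2 a1 b a : vadd a1 b = a <-> vsub a b = a1.
Proof.
  destruct a as [[[a0 x1] a2] a3], b as [[[b0 b1] b2] b3], a1 as [[[c0 c1] c2] c3]; simpl.
  split; intros H; inversion H; subst; f_equal; try f_equal; try f_equal; lia.
Qed.

Lemma vsub_vadd a b : vsub (vadd a b) a = b.
Proof. apply vadd_vsub_iff; auto. Qed.

Lemma bform_add_l L a b c : bform L (vadd a b) c = bform L a c + bform L b c.
Proof.
  destruct a as [[[a0 a1] a2] a3], b as [[[b0 b1] b2] b3], c as [[[c0 c1] c2] c3].
  unfold bform, sum4; simpl. ring.
Qed.
Lemma bform_add_r L a b c : bform L a (vadd b c) = bform L a b + bform L a c.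
Proof.
  destruct a as [[[a0 a1] a2] a3], b as [[[b0 b1] b2] b3], c as [[[c0 c1] c2] c3].
  unfold bform, sum4; simpl. ring.
Qed.

Definition zsum (f : term -> Z) (l : tor) : Z := fold_right (fun x acc => f x + acc) 0 l.

Lemma zsum_app f l1 l2 : zsum f (l1 ++ l2) = zsum f l1 + zsum f l2.
Proof. induction l1; simpl; lia. Qed.
Lemma zsum_ext_in f g l : (forall x, In x l -> f x = g x) -> zsum f l = zsum g l.
Proof. induction l; simpl; intros H; auto. rewrite H, IHl; auto. Qed.
Lemma zsum_ext f g l : (forall x, f x = g x) -> zsum f l = zsum g l.
Proof. intros; apply zsum_ext_in; auto. Qed.
Lemma zsum_plus f g l : zsum (fun x => f x + g x) l = zsum f l + zsum g l.
Proof. induction l; simpl; lia. Qed.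
Lemma zsum_mul c f l : c * zsum f l = zsum (fun x => c * f x) l.
Proof. induction l; simpl; lia. Qed.
Lemma zsum_mulr c f l : zsum f l * c = zsum (fun x => f x * c) l.
Proof. induction l; simpl; lia. Qed.
Lemma zsum_zero f l : (forall x, f x = 0) -> zsum f l = 0.
Proof. induction l; simpl; intros H; auto. rewrite H, IHl; auto. Qed.
Lemma zsum_map f g l : zsum f (map g l) = zsum (fun x => f (g x)) l.
Proof. induction l; simpl; lia. Qed.
Lemma zsum_swap (F : term -> term -> Z) t w :
  zsum (fun x => zsum (fun z => F x z) w) t = zsum (fun z => zsum (fun x => F x z) t) w.
Proof.
  induction t; simpl.
  - symmetry; apply zsum_zero; auto.
  - rewrite IHt, <- zsum_plus. auto.
Qed.

Definition matchb (k : Z) (a : vec) (x : term) : bool :=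
  match x with (_, k', a') => Z.eqb k k' && veqb a a' end.
Definition cf (x : term) : Z := match x with (c, _, _) => c end.

Lemma coeff_zsum t k a : coeff t k a = zsum (fun x => if matchb k a x then cf x else 0) t.
Proof. induction t as [|[[c k'] a'] t IH]; simpl; auto. rewrite IH. destruct (_ && _); lia. Qed.

Lemma coeff_app t u k a : coeff (t ++ u) k a = coeff t k a + coeff u k a.
Proof. rewrite !coeff_zsum, zsum_app; auto. Qed.

Definition tneg (t : tor) : tor := map (fun x : term => match x with (c, k, a) => (-c, k, a) end) t.

Lemma coeff_neg t k a : coeff (tneg t) k a = - coeff t k a.
Proof.
  rewrite !coeff_zsum; unfold tneg; rewrite zsum_map.
  induction t as [|[[c k'] a'] t IH]; simpl; auto. rewrite IH. destruct (_ && _); lia.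
Qed.

Lemma coeff_scale j t k a : coeff (tscale j t) k a = coeff t (k - j) a.
Proof.
  rewrite !coeff_zsum; unfold tscale; rewrite zsum_map. apply zsum_ext.
  intros [[c k'] a']; simpl.
  destruct (Z.eqb_spec k (k'+j)), (Z.eqb_spec (k-j) k'); simpl; auto; lia.
Qed.

Lemma coeff_mul_l t u k a :
  coeff (tmul t u) k a =
  zsum (fun x => match x with (c, k1, a1) =>
          c * coeff u (k - k1 - bform Lambda0 a1 (vsub a a1)) (vsub a a1) end) t.
Proof.
  induction t as [|[[c k1] a1] t IH]; simpl; auto.
  rewrite coeff_app, IH. f_equal.
  rewrite !coeff_zsum, zsum_map, zsum_mul. apply zsum_ext.
  intros [[c2 k2] b]; simpl.
  destruct (veqb (vsub a a1) b) eqn:E.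
  - apply veqb_spec in E. pose proof E as E'. apply vadd_vsub_iff in E'.
    subst b. rewrite E', veqb_refl.
    destruct (Z.eqb_spec k (k1 + k2 + bform Lambda0 a1 (vsub a a1))),
      (Z.eqb_spec (k - k1 - bform Lambda0 a1 (vsub a a1)) k2); simpl; lia.
  - assert (veqb a (vadd a1 b) = false) as ->.
    { destruct (veqb a (vadd a1 b)) eqn:E2; auto. apply veqb_spec in E2.
      symmetry in E2. apply vadd_vsub_iff in E2. subst. rewrite veqb_refl in E. discriminate. }
    rewrite !andb_false_r. lia.
Qed.

Lemma coeff_single c k1 a1 k a : coeff [(c,k1,a1)] k a = if Z.eqb k k1 && veqb a a1 then c else 0.
Proof. simpl. destruct (_ && _); lia. Qed.

Lemma coeff_mul_r t u k a :
  coeff (tmul t u) k a =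
  zsum (fun y => match y with (c2, k2, b) =>
          c2 * coeff t (k - k2 - bform Lambda0 (vsub a b) b) (vsub a b) end) u.
Proof.
  induction t as [|[[c k1] a1] t IH]; simpl.
  - symmetry; apply zsum_zero. intros [[? ?] ?]; lia.
  - rewrite coeff_app, IH.
    rewrite !coeff_zsum, zsum_map.
    rewrite <- zsum_plus. apply zsum_ext.
    intros [[c2 k2] b]; simpl.
    destruct (veqb (vsub a b) a1) eqn:E.
    + apply veqb_spec in E. pose proof E as E'. apply vadd_vsub_iff2 in E'.
      subst a1. rewrite E', veqb_refl.
      destruct (Z.eqb_spec k (k1 + k2 + bform Lambda0 (vsub a b) b)),
               (Z.eqb_spec (k - k2 - bform Lambda0 (vsub a b) b) k1); simpl; first [ring | lia].
    + assert (veqb a (vadd a1 b) = false) as ->.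
      { destruct (veqb a (vadd a1 b)) eqn:E2; auto. apply veqb_spec in E2.
        symmetry in E2. apply vadd_vsub_iff2 in E2. subst. rewrite veqb_refl in E. discriminate. }
      rewrite !andb_false_r. ring.
Qed.

Instance teq_equiv : Equivalence teq.
Proof.
  split; unfold teq.
  - intros t k a; auto.
  - intros t u H k a; auto.
  - intros t u w H1 H2 k a; rewrite H1; auto.
Qed.

Infix "≈" := teq (at level 70).

Instance tadd_proper : Proper (teq ==> teq ==> teq) tadd.
Proof. intros t t' H u u' H' k a; unfold tadd; rewrite !coeff_app, H, H'; auto. Qed.
Instance tscale_proper j : Proper (teq ==> teq) (tscale j).
Proof. intros t t' H k a; rewrite !coeff_scale, H; auto. Qed.
Instance tneg_proper : Proper (teq ==> teq) tneg.
Proof. intros t t' H k a; rewrite !coeff_neg, H; auto. Qed.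
Instance tmul_proper : Proper (teq ==> teq ==> teq) tmul.
Proof.
  intros t t' H u u' H' k a.
  transitivity (coeff (tmul t' u) k a).
  - rewrite !coeff_mul_r. apply zsum_ext. intros [[c k2] b]. rewrite H; auto.
  - rewrite !coeff_mul_l. apply zsum_ext. intros [[c k2] b]. rewrite H'; auto.
Qed.

Lemma coeff_add t u k a : coeff (tadd t u) k a = coeff t k a + coeff u k a.
Proof. apply coeff_app. Qed.

Lemma mul_add_l t u w : tmul (tadd t u) w = tadd (tmul t w) (tmul u w).
Proof. unfold tmul, tadd. apply flat_map_app. Qed.
Lemma mul_add_r t u w : tmul t (tadd u w) ≈ tadd (tmul t u) (tmul t w).
Proof. intros k a. rewrite coeff_add, !coeff_mul_r. unfold tadd. apply zsum_app. Qed.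

Lemma zsum_opp f l : - zsum f l = zsum (fun x => - f x) l.
Proof. induction l; simpl; lia. Qed.

Lemma mul_neg_l t u : tmul (tneg t) u ≈ tneg (tmul t u).
Proof.
  intros k a. rewrite coeff_neg, !coeff_mul_l. unfold tneg. rewrite zsum_map.
  rewrite zsum_opp.
  apply zsum_ext. intros [[c k2] b]. ring.
Qed.
Lemma mul_neg_r t u : tmul t (tneg u) ≈ tneg (tmul t u).
Proof.
  intros k a. rewrite coeff_neg, !coeff_mul_r. unfold tneg. rewrite zsum_map.
  rewrite zsum_opp.
  apply zsum_ext. intros [[c k2] b]. ring.
Qed.
Lemma mul_scale_l j t u : tmul (tscale j t) u ≈ tscale j (tmul t u).
Proof.
  intros k a. rewrite coeff_scale, !coeff_mul_l. unfold tscale. rewrite zsum_map.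
  apply zsum_ext. intros [[c k2] b]. f_equal. f_equal. ring.
Qed.
Lemma mul_scale_r j t u : tmul t (tscale j u) ≈ tscale j (tmul t u).
Proof.
  intros k a. rewrite coeff_scale, !coeff_mul_r. unfold tscale. rewrite zsum_map.
  apply zsum_ext. intros [[c k2] b]. f_equal. f_equal. ring.
Qed.
Lemma scale_scale i j t : tscale i (tscale j t) ≈ tscale (j + i) t.
Proof. intros k a. rewrite !coeff_scale. f_equal. ring. Qed.
Lemma scale_add j t u : tscale j (tadd t u) = tadd (tscale j t) (tscale j u).
Proof. unfold tscale, tadd. apply map_app. Qed.
Lemma scale_neg j t : tscale j (tneg t) ≈ tneg (tscale j t).
Proof. intros k a. rewrite coeff_scale, !coeff_neg, coeff_scale. auto. Qed.
Lemma scale_0 t : tscale 0 t ≈ t.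
Proof. intros k a. rewrite coeff_scale. f_equal. ring. Qed.

Lemma vsub_swap a b c : vsub (vsub a b) c = vsub (vsub a c) b.
Proof.
  destruct a as [[[a0 a1] a2] a3], b as [[[b0 b1] b2] b3], c as [[[c0 c1] c2] c3]; simpl.
  apply vec_eq; lia.
Qed.
Lemma vadd_vsub_cancel a b : vadd (vsub a b) b = a.
Proof.
  destruct a as [[[a0 a1] a2] a3], b as [[[b0 b1] b2] b3]; simpl.
  apply vec_eq; lia.
Qed.

Lemma mul_assoc t u w : tmul (tmul t u) w ≈ tmul t (tmul u w).
Proof.
  intros k a. rewrite coeff_mul_r, coeff_mul_l.
  set (F := fun (x z : term) => match x, z with (c1,k1,a1), (c3,k3,cc) =>
     c3 * (c1 * coeff u (k - k3 - bform Lambda0 (vsub a cc) cc - k1 - bform Lambda0 a1 (vsub (vsub a cc) a1))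
                    (vsub (vsub a cc) a1)) end).
  transitivity (zsum (fun z => zsum (fun x => F x z) t) w).
  { apply zsum_ext. intros [[c3 k3] cc]. rewrite coeff_mul_l, zsum_mul.
    apply zsum_ext. intros [[c1 k1] a1]. reflexivity. }
  rewrite <- zsum_swap. apply zsum_ext. intros [[c1 k1] a1].
  rewrite coeff_mul_r, zsum_mul. apply zsum_ext. intros [[c3 k3] cc].
  unfold F.
  rewrite (vsub_swap a cc a1). set (b := vsub (vsub a a1) cc).
  assert (E1 : vsub a cc = vadd a1 b).
  { unfold b. clear. destruct a as [[[a0 x1] a2] a3], a1 as [[[b0 b1] b2] b3], cc as [[[c0 c1] c2] c3].
    simpl. apply vec_eq; lia. }
  assert (E2 : vsub a a1 = vadd b cc).
  { unfold b. clear. destruct a as [[[a0 x1] a2] a3], a1 as [[[b0 b1] b2] b3], cc as [[[c0 c1] c2] c3].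
    simpl. apply vec_eq; lia. }
  rewrite E1, E2.
  rewrite !bform_add_l, !bform_add_r.
  match goal with |- _ * (_ * coeff u ?x _) = _ * (_ * coeff u ?y _) => replace x with y by ring end.
  ring.
Qed.

Lemma tneg_add t u : tneg (tadd t u) = tadd (tneg t) (tneg u).
Proof. unfold tneg, tadd. apply map_app. Qed.

Ltac coeffs := let k := fresh "k" in let a := fresh "a" in intros k a;
  repeat (rewrite ?coeff_add, ?coeff_neg, ?coeff_scale).

Lemma zsum_zero_in f l : (forall x, In x l -> f x = 0) -> zsum f l = 0.
Proof. induction l; simpl; intros H; auto. rewrite H, IHl; auto. Qed.

Lemma coeff_notin t k a : (forall x, In x t -> matchb k a x = false) -> coeff t k a = 0.
Proof.
  intros H. rewrite coeff_zsum. apply zsum_zero_in. intros x Hx. rewrite H; auto.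
Qed.

Definition keyb (t u : tor) (x : term) : bool :=
  match x with (_, k, a) => Z.eqb (coeff t k a) (coeff u k a) end.
Definition teqb (t u : tor) : bool := forallb (keyb t u) (t ++ u).

Lemma matchb_key k a x : matchb k a x = true -> exists c, x = (c, k, a).
Proof.
  destruct x as [[c k'] a']; simpl. rewrite andb_true_iff, Z.eqb_eq, veqb_spec.
  intros [-> ->]; eauto.
Qed.

Lemma teqb_sound t u : teqb t u = true -> t ≈ u.
Proof.
  unfold teqb. rewrite forallb_forall. intros H k a.
  destruct (existsb (matchb k a) (t ++ u)) eqn:E.
  - apply existsb_exists in E. destruct E as [x [Hx Hm]].
    apply matchb_key in Hm. destruct Hm as [c ->].
    apply H in Hx. simpl in Hx. apply Z.eqb_eq; auto.
  - assert (forall x, In x (t ++ u) -> matchb k a x = false).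
    { intros x Hx. destruct (matchb k a x) eqn:E2; auto.
      assert (existsb (matchb k a) (t ++ u) = true) by (apply existsb_exists; eauto). congruence. }
    rewrite !coeff_notin; auto; intros x Hx; apply H0; apply in_or_app; auto.
Qed.

Definition tsum (t : tor) : Z := zsum cf t.

Lemma tsum_add t u : tsum (tadd t u) = tsum t + tsum u.
Proof. apply zsum_app. Qed.
Lemma tsum_neg t : tsum (tneg t) = - tsum t.
Proof. unfold tsum, tneg. rewrite zsum_map, zsum_opp. apply zsum_ext. intros [[c k] a]; auto. Qed.
Lemma tsum_mul t u : tsum (tmul t u) = tsum t * tsum u.
Proof.
  unfold tsum, tmul. induction t as [|[[c k] a] t IH]; simpl; auto.
  rewrite zsum_app, IH, zsum_map. rewrite Z.mul_add_distr_r. f_equal.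
  rewrite zsum_mul. apply zsum_ext. intros [[c2 k2] b]; auto.
Qed.

Lemma filter_length_le {A} (f : A -> bool) l : (length (filter f l) <= length l)%nat.
Proof. induction l; simpl; auto. destruct (f a); simpl; lia. Qed.
Lemma filter_length_lt {A} (f : A -> bool) l x : In x l -> f x = false ->
  (length (filter f l) < length l)%nat.
Proof.
  induction l; simpl; [tauto|]. intros [->|H] Hf.
  - rewrite Hf. pose proof (filter_length_le f l). lia.
  - destruct (f a); simpl; [apply IHl in H; auto; lia|]. pose proof (filter_length_le f l). lia.
Qed.

Lemma coeff_split p t k a : coeff t k a = coeff (filter p t) k a + coeff (filter (fun x => negb (p x)) t) k a.
Proof.
  rewrite !coeff_zsum. induction t as [|x t IH]; simpl; auto.
  destruct (p x); simpl; rewrite IH; lia.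
Qed.

Lemma matchb_eq k a k' a' x : matchb k a x = true -> matchb k' a' x = true -> k = k' /\ a = a'.
Proof.
  intros H1 H2. apply matchb_key in H1. destruct H1 as [c ->].
  simpl in H2. rewrite andb_true_iff, Z.eqb_eq, veqb_spec in H2. destruct H2; auto.
Qed.

Lemma coeff_filter_in k0 a0 t k a :
  coeff (filter (matchb k0 a0) t) k a = if Z.eqb k k0 && veqb a a0 then coeff t k0 a0 else 0.
Proof.
  destruct (Z.eqb k k0 && veqb a a0) eqn:E.
  - rewrite andb_true_iff, Z.eqb_eq, veqb_spec in E. destruct E; subst.
    rewrite (coeff_split (matchb k0 a0) t k0 a0).
    rewrite (coeff_notin (filter (fun x => negb (matchb k0 a0 x)) t)); [lia|].
    intros x Hx. apply filter_In in Hx. destruct Hx as [_ Hx]. destruct (matchb k0 a0 x); auto.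
  - apply coeff_notin. intros x Hx. apply filter_In in Hx. destruct Hx as [_ Hx].
    destruct (matchb k a x) eqn:E2; auto.
    destruct (matchb_eq _ _ _ _ _ E2 Hx) as [-> ->]. rewrite Z.eqb_refl, veqb_refl in E. discriminate.
Qed.

Lemma coeff_filter_out_same k0 a0 t : coeff (filter (fun x => negb (matchb k0 a0 x)) t) k0 a0 = 0.
Proof.
  apply coeff_notin. intros x Hx. apply filter_In in Hx. destruct Hx as [_ Hx].
  destruct (matchb k0 a0 x); auto.
Qed.

Lemma filter_out_teq k0 a0 t : coeff t k0 a0 = 0 -> t ≈ filter (fun x => negb (matchb k0 a0 x)) t.
Proof.
  intros H k a. rewrite (coeff_split (matchb k0 a0) t k a) at 1. rewrite coeff_filter_in.
  destruct (_ && _); lia.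
Qed.

Lemma tsum_filter_in k0 a0 t : tsum (filter (matchb k0 a0) t) = coeff t k0 a0.
Proof.
  unfold tsum. rewrite coeff_zsum. induction t as [|x t IH]; simpl; auto.
  destruct (matchb k0 a0 x); simpl; lia.
Qed.

Lemma tsum_split p t : tsum t = tsum (filter p t) + tsum (filter (fun x => negb (p x)) t).
Proof. unfold tsum. induction t as [|x t IH]; simpl; auto. destruct (p x); simpl; lia. Qed.

Lemma tsum_zero t : t ≈ tzero -> tsum t = 0.
Proof.
  remember (length t) as n. revert t Heqn. induction n as [n IH] using lt_wf_ind.
  intros t Hn H. destruct t as [|[[c k0] a0] t'].
  - reflexivity.
  - rewrite (tsum_split (matchb k0 a0)), tsum_filter_in.
    rewrite (IH (length (filter (fun x => negb (matchb k0 a0 x)) ((c,k0,a0)::t')))); auto.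
    + rewrite (H k0 a0). reflexivity.
    + subst n. apply (filter_length_lt _ _ (c,k0,a0)); simpl; auto.
      rewrite Z.eqb_refl, veqb_refl; auto.
    + rewrite <- filter_out_teq; auto.
Qed.

Definition vlt (a b : vec) : Prop :=
  match a, b with (a0,a1,a2,a3), (b0,b1,b2,b3) =>
    a0 < b0 \/ (a0 = b0 /\ (a1 < b1 \/ (a1 = b1 /\ (a2 < b2 \/ (a2 = b2 /\ a3 < b3))))) end.
Definition keylt (k : Z) (a : vec) (l : Z) (b : vec) : Prop := vlt a b \/ (a = b /\ k < l).

Lemma vlt_irrefl a : ~ vlt a a.
Proof. destruct a as [[[a0 a1] a2] a3]; simpl; lia. Qed.
Lemma vlt_trans a b c : vlt a b -> vlt b c -> vlt a c.
Proof. destruct a as [[[a0 a1] a2] a3], b as [[[b0 b1] b2] b3], c as [[[c0 c1] c2] c3]; simpl; lia. Qed.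
Lemma vlt_tri a b : vlt a b \/ a = b \/ vlt b a.
Proof.
  destruct (classic (vlt a b)) as [H1|H1]; auto.
  destruct (classic (vlt b a)) as [H2|H2]; auto.
  right; left.
  destruct a as [[[a0 a1] a2] a3], b as [[[b0 b1] b2] b3]; simpl in *.
  apply vec_eq; lia.
Qed.
Lemma keylt_irrefl k a : ~ keylt k a k a.
Proof. unfold keylt. intros [H|[_ H]]; [apply (vlt_irrefl a H)|lia]. Qed.
Lemma keylt_trans k a l b m c : keylt k a l b -> keylt l b m c -> keylt k a m c.
Proof.
  unfold keylt. intros [H1|[-> H1]] [H2|[-> H2]]; eauto using vlt_trans. right; split; auto; lia.
Qed.
Lemma keylt_tri k a l b : keylt k a l b \/ (k = l /\ a = b) \/ keylt l b k a.
Proof.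
  unfold keylt. destruct (vlt_tri a b) as [H|[->|H]]; auto.
  destruct (Z.lt_trichotomy k l) as [H|[->|H]]; auto.
Qed.

Definition tkey (x : term) : Z * vec := match x with (_, k, a) => (k, a) end.
Definition tkeylt (x y : term) : Prop := keylt (fst (tkey x)) (snd (tkey x)) (fst (tkey y)) (snd (tkey y)).

Lemma max_exists (t : tor) : t <> [] -> exists x, In x t /\ forall y, In y t -> ~ tkeylt x y.
Proof.
  induction t as [|x t IH]; [congruence|]. intros _.
  destruct t as [|x' t'].
  - exists x. split; simpl; auto. intros y [Hy|[]]. subst.
    match goal with |- ~ tkeylt ?z ?z => destruct z as [[c k] a]; apply keylt_irrefl end.
  - destruct IH as [m [Hm Hmax]]; [congruence|].
    destruct (classic (tkeylt m x)) as [Hlt|Hnlt].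
    + exists x. split; [simpl; auto|]. intros y [Hy|Hy].
      * subst. match goal with |- ~ tkeylt ?z ?z => destruct z as [[c k] a]; apply keylt_irrefl end.
      * intros Hxy. apply (Hmax y Hy). destruct m as [[? ?] ?], x as [[? ?] ?], y as [[? ?] ?].
        eapply keylt_trans; eauto.
    + exists m. split; [simpl; auto|]. intros y [Hy|Hy]; subst; auto.
Qed.

Lemma coeff_above t k a : (forall y, In y t -> ~ keylt k a (fst (tkey y)) (snd (tkey y))) ->
  forall k' a', keylt k a k' a' -> coeff t k' a' = 0.
Proof.
  intros H k' a' Hlt. apply coeff_notin. intros x Hx.
  destruct (matchb k' a' x) eqn:E; auto. apply matchb_key in E. destruct E as [c ->].
  exfalso. apply (H _ Hx). simpl. auto.
Qed.

Lemma nz_max : forall t, ~ (t ≈ tzero) ->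
  exists k a, coeff t k a <> 0 /\ forall k' a', keylt k a k' a' -> coeff t k' a' = 0.
Proof.
  intros t. remember (length t) as n. revert t Heqn. induction n as [n IH] using lt_wf_ind.
  intros t Hn Hnz.
  destruct (max_exists t) as [[[c0 k0] a0] [Hin Hmax]].
  { intros ->. apply Hnz. reflexivity. }
  destruct (Z.eq_dec (coeff t k0 a0) 0) as [Hz|Hnz0].
  - set (t' := filter (fun x => negb (matchb k0 a0 x)) t).
    assert (Ht : t ≈ t') by (apply filter_out_teq; auto).
    destruct (IH (length t')) with t' as [k [a [H1 H2]]]; auto.
    + subst n. apply (filter_length_lt _ _ (c0,k0,a0)); auto. simpl. rewrite Z.eqb_refl, veqb_refl; auto.
    + rewrite <- Ht; auto.
    + exists k, a. rewrite (Ht k a). split; auto. intros k' a' Hl. rewrite (Ht k' a'). auto.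
  - exists k0, a0. split; auto. apply coeff_above. intros y Hy. apply (Hmax y Hy).
Qed.

Lemma keylt_shift k0 a0 kY aY kx ax :
  keylt kx ax k0 a0 ->
  keylt kY aY (k0 + kY + bform Lambda0 a0 aY - kx - bform Lambda0 ax (vsub (vadd a0 aY) ax))
              (vsub (vadd a0 aY) ax).
Proof.
  unfold keylt. intros [H|[-> H]].
  - left. clear -H. destruct a0 as [[[a0 a1] a2] a3], aY as [[[b0 b1] b2] b3], ax as [[[c0 c1] c2] c3].
    simpl in *. lia.
  - right. rewrite vsub_vadd. split; auto. lia.
Qed.

Lemma dom Y D : ~ (Y ≈ tzero) -> tmul D Y ≈ tzero -> D ≈ tzero.
Proof.
  intros HY. destruct (nz_max Y HY) as [kY [aY [HcY HabY]]].
  remember (length D) as n. revert D Heqn. induction n as [n IH] using lt_wf_ind.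
  intros D Hn HD.
  destruct D as [|x D0]; [reflexivity|].
  destruct (max_exists (x :: D0)) as [[[c0 k0] a0] [Hin Hmax]]; [congruence|].
  set (D := x :: D0) in *.
  destruct (Z.eq_dec (coeff D k0 a0) 0) as [Hz|Hnz0].
  - set (D' := filter (fun x => negb (matchb k0 a0 x)) D).
    assert (Ht : D ≈ D') by (apply filter_out_teq; auto).
    rewrite Ht. apply (IH (length D')); auto.
    + subst n. apply (filter_length_lt _ _ (c0,k0,a0)); auto. simpl. rewrite Z.eqb_refl, veqb_refl; auto.
    + rewrite <- Ht; auto.
  - exfalso.
    specialize (HD (k0 + kY + bform Lambda0 a0 aY) (vadd a0 aY)).
    assert (E : coeff (tmul D Y) (k0 + kY + bform Lambda0 a0 aY) (vadd a0 aY)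
                = coeff D k0 a0 * coeff Y kY aY).
    { rewrite coeff_mul_l, coeff_zsum, zsum_mulr. apply zsum_ext_in. intros [[c k1] a1] Hx.
      destruct (matchb k0 a0 (c,k1,a1)) eqn:Em.
      - apply matchb_key in Em. destruct Em as [c' Em]. inversion Em; subst.
        simpl. rewrite vsub_vadd. f_equal. f_equal. lia.
      - simpl. rewrite (HabY _ _). lia.
        destruct (keylt_tri k1 a1 k0 a0) as [Hl|[[-> ->]|Hl]].
        + apply keylt_shift. auto.
        + simpl in Em. rewrite Z.eqb_refl, veqb_refl in Em. discriminate.
        + exfalso. apply (Hmax _ Hx). exact Hl. }
    rewrite E in HD. change (coeff tzero _ _) with 0 in HD.
    apply Hnz0. nia.
Qed.

Definition Wm : tor := M (0,0,1,1).

Fixpoint Yv (n : nat) : tor :=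
  match n with
  | O => M (1,0,0,0)
  | S n' => match n' with
            | O => M (0,1,0,0)
            | S n'' => tadd (tmul (Yv n') s1) (tneg (tmul (Yv n'') Wm))
            end
  end.

Lemma Yv_SS n : Yv (S (S n)) = tadd (tmul (Yv (S n)) s1) (tneg (tmul (Yv n) Wm)).
Proof. reflexivity. Qed.

Lemma Ws1 : tmul Wm s1 ≈ tmul s1 Wm.
Proof. apply teqb_sound. vm_compute. reflexivity. Qed.
Lemma WY0 : tmul Wm (Yv 0) ≈ tscale 2 (tmul (Yv 0) Wm).
Proof. apply teqb_sound. vm_compute. reflexivity. Qed.
Lemma WY1 : tmul Wm (Yv 1) ≈ tscale 2 (tmul (Yv 1) Wm).
Proof. apply teqb_sound. vm_compute. reflexivity. Qed.
Lemma L0 : tmul s1 (Yv 1) ≈ tadd (Yv 2) (tmul Wm (Yv 0)).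
Proof. apply teqb_sound. vm_compute. reflexivity. Qed.
Lemma L1 : tmul s1 (Yv 2) ≈ tadd (Yv 3) (tmul Wm (Yv 1)).
Proof. apply teqb_sound. vm_compute. reflexivity. Qed.
Lemma E0 : tmul (Yv 2) (Yv 0) ≈ tadd (tscale 1 (M (0,0,Z.of_nat 0 + 1, Z.of_nat 0))) (tmul (Yv 1) (Yv 1)).
Proof. apply teqb_sound. vm_compute. reflexivity. Qed.

Ltac cf_close := let k := fresh "k" in let a := fresh "a" in intros k a;
  repeat (rewrite ?coeff_add, ?coeff_neg, ?coeff_scale); lia.

Lemma W_step A B C : C ≈ tadd (tmul B s1) (tneg (tmul A Wm)) ->
  tmul Wm A ≈ tscale 2 (tmul A Wm) -> tmul Wm B ≈ tscale 2 (tmul B Wm) ->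
  tmul Wm C ≈ tscale 2 (tmul C Wm).
Proof.
  intros HC HA HB. rewrite HC.
  rewrite mul_add_r, mul_neg_r, mul_add_l, mul_neg_l.
  rewrite <- (mul_assoc Wm B s1), <- (mul_assoc Wm A Wm), HA, HB, !mul_scale_l.
  rewrite (mul_assoc B Wm s1), Ws1, <- (mul_assoc B s1 Wm).
  cf_close.
Qed.

Lemma L_step A B C D :
  D ≈ tadd (tmul C s1) (tneg (tmul B Wm)) ->
  C ≈ tadd (tmul B s1) (tneg (tmul A Wm)) ->
  tmul s1 B ≈ tadd C (tmul Wm A) ->
  tmul s1 C ≈ tadd D (tmul Wm B) ->
  tmul s1 D ≈ tadd (tadd (tmul D s1) (tneg (tmul C Wm))) (tmul Wm C).
Proof.
  intros HD HC HsB HsC.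
  assert (HWC : tmul Wm C ≈ tadd (tmul (tmul Wm B) s1) (tneg (tmul (tmul Wm A) Wm))).
  { rewrite HC, mul_add_r, mul_neg_r, <- !mul_assoc. reflexivity. }
  rewrite HWC.
  transitivity (tmul s1 (tadd (tmul C s1) (tneg (tmul B Wm)))).
  { apply tmul_proper; [reflexivity | exact HD]. }
  rewrite mul_add_r, mul_neg_r, <- (mul_assoc s1 C s1), <- (mul_assoc s1 B Wm), HsB, HsC.
  rewrite !mul_add_l. cf_close.
Qed.

Lemma E_step A B C D P P' :
  D ≈ tadd (tmul C s1) (tneg (tmul B Wm)) ->
  tmul s1 B ≈ tadd C (tmul Wm A) ->
  tmul Wm A ≈ tscale 2 (tmul A Wm) -> tmul Wm B ≈ tscale 2 (tmul B Wm) ->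
  tmul C A ≈ tadd P (tmul B B) ->
  tscale 2 (tmul P Wm) ≈ P' ->
  tmul D B ≈ tadd P' (tmul C C).
Proof.
  intros HD HL HWA HWB HE HP.
  rewrite HD, <- HP, mul_add_l, mul_neg_l.
  rewrite (mul_assoc C s1 B), (mul_assoc B Wm B), HL, HWB, mul_add_r, mul_scale_r.
  rewrite HWA, mul_scale_r, <- (mul_assoc C A Wm), HE, <- (mul_assoc B B Wm), mul_add_l.
  cf_close.
Qed.

Lemma WY : forall n, tmul Wm (Yv n) ≈ tscale 2 (tmul (Yv n) Wm).
Proof.
  assert (H : forall n, tmul Wm (Yv n) ≈ tscale 2 (tmul (Yv n) Wm) /\
                        tmul Wm (Yv (S n)) ≈ tscale 2 (tmul (Yv (S n)) Wm)).
  { induction n as [|n [IH1 IH2]].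
    - split; [apply WY0 | apply WY1].
    - split; auto. apply (W_step (Yv n) (Yv (S n))); auto. rewrite Yv_SS. reflexivity. }
  intros n; apply H.
Qed.

Lemma LY : forall n, tmul s1 (Yv (S n)) ≈ tadd (Yv (S (S n))) (tmul Wm (Yv n)).
Proof.
  assert (H : forall n, tmul s1 (Yv (S n)) ≈ tadd (Yv (S (S n))) (tmul Wm (Yv n)) /\
                        tmul s1 (Yv (S (S n))) ≈ tadd (Yv (S (S (S n)))) (tmul Wm (Yv (S n)))).
  { induction n as [|n [IH1 IH2]].
    - split; [apply L0 | apply L1].
    - split; auto. rewrite (Yv_SS (S (S n))).
      apply (L_step (Yv n) (Yv (S n))); auto; rewrite Yv_SS; reflexivity. }
  intros n; apply H.
Qed.

Definition Pm (m : nat) : tor := tscale 1 (M (0,0,Z.of_nat m + 1, Z.of_nat m)).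

Lemma single_eq c k a c' k' a' : c = c' -> k = k' -> a = a' -> [(c,k,a)] ≈ [(c',k',a')].
Proof. intros -> -> ->; reflexivity. Qed.

Lemma Pm_step m : tscale 2 (tmul (Pm m) Wm) ≈ Pm (S m).
Proof.
  unfold Pm, tscale, tmul, M, Wm. cbn [map flat_map app]. rewrite Nat2Z.inj_succ.
  apply single_eq; [ring| |unfold vadd; apply vec_eq; lia].
  unfold bform, sum4, vget, Lambda0. ring.
Qed.

Lemma EY : forall m, tmul (Yv (S (S m))) (Yv m) ≈ tadd (Pm m) (tmul (Yv (S m)) (Yv (S m))).
Proof.
  induction m as [|m IH].
  - apply E0.
  - apply (E_step (Yv m) (Yv (S m)) (Yv (S (S m))) (Yv (S (S (S m)))) (Pm m)); auto.
    + rewrite Yv_SS. reflexivity.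
    + apply LY.
    + apply WY.
    + apply WY.
    + apply Pm_step.
Qed.

Lemma tsum_Yv : forall n, 1 <= tsum (Yv n) <= tsum (Yv (S n)).
Proof.
  induction n as [|n IH].
  - vm_compute. split; discriminate.
  - split; [lia|]. rewrite Yv_SS, tsum_add, tsum_neg, !tsum_mul.
    assert (tsum s1 = 3) as -> by reflexivity. assert (tsum Wm = 1) as -> by reflexivity. lia.
Qed.

Lemma Yv_nz n : ~ (Yv n ≈ tzero).
Proof. intros H. apply tsum_zero in H. pose proof (tsum_Yv n). lia. Qed.

Definition BE (z : Z) (i j : nat) : Z :=
  match i, j with
  | 0%nat, 1%nat => 2 | 1%nat, 0%nat => -2
  | 2%nat, 0%nat => z + 1 | 2%nat, 1%nat => - z
  | 3%nat, 0%nat => z | 3%nat, 1%nat => 1 - z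
  | _, _ => 0 end.
Definition BO (z : Z) (i j : nat) : Z :=
  match i, j with
  | 0%nat, 1%nat => -2 | 1%nat, 0%nat => 2
  | 2%nat, 0%nat => - z | 2%nat, 1%nat => z + 1
  | 3%nat, 0%nat => 1 - z | 3%nat, 1%nat => z
  | _, _ => 0 end.
Definition LE (z : Z) (i j : nat) : Z :=
  match i, j with
  | 0%nat, 2%nat => z - 1 | 2%nat, 0%nat => 1 - z
  | 0%nat, 3%nat => - z | 3%nat, 0%nat => z
  | 1%nat, 2%nat => z | 2%nat, 1%nat => - z
  | 1%nat, 3%nat => -(z+1) | 3%nat, 1%nat => z + 1
  | 2%nat, 3%nat => -2 | 3%nat, 2%nat => 2
  | _, _ => 0 end.
Definition LO (z : Z) (i j : nat) : Z :=
  match i, j with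
  | 0%nat, 2%nat => z | 2%nat, 0%nat => - z
  | 0%nat, 3%nat => -(z+1) | 3%nat, 0%nat => z + 1
  | 1%nat, 2%nat => z - 1 | 2%nat, 1%nat => 1 - z
  | 1%nat, 3%nat => - z | 3%nat, 1%nat => z
  | 2%nat, 3%nat => -2 | 3%nat, 2%nat => 2
  | _, _ => 0 end.

Definition E0c (a i : nat) : Z :=
  if Nat.eqb i 0 then (match a with 0%nat => -1 | 1%nat => 2 | _ => 0 end)
  else if Nat.eqb a i then 1 else 0.
Definition E1c (a i : nat) : Z :=
  if Nat.eqb i 1 then (match a with 1%nat => -1 | 0%nat => 2 | _ => 0 end)
  else if Nat.eqb a i then 1 else 0.

Ltac idx i := destruct i as [|[|[|[|i]]]].

Lemma Emat_E z : 0 <= z -> Emat 0 (BE z) = E0c.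
Proof.
  intros Hz. apply functional_extensionality; intros a; apply functional_extensionality; intros i.
  unfold Emat, E0c, E1c. idx a; idx i; simpl; try reflexivity; lia.
Qed.
Lemma Emat_O z : 0 <= z -> Emat 1 (BO z) = E1c.
Proof.
  intros Hz. apply functional_extensionality; intros a; apply functional_extensionality; intros i.
  unfold Emat, E0c, E1c. idx a; idx i; simpl; try reflexivity; lia.
Qed.

Lemma mutB_E z : 0 <= z -> mutB 0 (BE z) = BO (z + 1).
Proof.
  intros Hz. apply functional_extensionality; intros i; apply functional_extensionality; intros j.
  unfold mutB. idx i; idx j; cbn [BE BO Nat.eqb orb]; Z.to_euclidean_division_equations; lia.
Qed.
Lemma mutB_O z : 0 <= z -> mutB 1 (BO z) = BE (z + 1).
Proof.
  intros Hz. apply functional_extensionality; intros i; apply functional_extensionality; intros j.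
  unfold mutB. idx i; idx j; cbn [BE BO Nat.eqb orb]; Z.to_euclidean_division_equations; lia.
Qed.
Lemma mutL_E z : 0 <= z -> mutL 0 (BE z) (LE z) = LO (z + 1).
Proof.
  intros Hz. unfold mutL. rewrite Emat_E by auto.
  apply functional_extensionality; intros i; apply functional_extensionality; intros j.
  unfold sum4. idx i; idx j; cbn [LE LO E0c E1c Nat.eqb]; lia.
Qed.
Lemma mutL_O z : 0 <= z -> mutL 1 (BO z) (LO z) = LE (z + 1).
Proof.
  intros Hz. unfold mutL. rewrite Emat_O by auto.
  apply functional_extensionality; intros i; apply functional_extensionality; intros j.
  unfold sum4. idx i; idx j; cbn [LE LO E0c E1c Nat.eqb]; lia.
Qed.

Lemma even_S m : Nat.even (S m) = negb (Nat.even m).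
Proof. rewrite Nat.even_succ, <- Nat.negb_even. reflexivity. Qed.

Lemma closed_forms : forall m,
  (Nat.even m = true /\ Bseq m = BE (Z.of_nat m) /\ Lseq m = LE (Z.of_nat m) /\ kidx m = 0%nat) \/
  (Nat.even m = false /\ Bseq m = BO (Z.of_nat m) /\ Lseq m = LO (Z.of_nat m) /\ kidx m = 1%nat).
Proof.
  induction m as [|m IH].
  - left. repeat split.
    + apply functional_extensionality; intros i; apply functional_extensionality; intros j.
      simpl. idx i; idx j; reflexivity.
    + apply functional_extensionality; intros i; apply functional_extensionality; intros j.
      simpl. idx i; idx j; reflexivity.
  - replace (Bseq (S m)) with (mutB (kidx m) (Bseq m)) by reflexivity.
    replace (Lseq (S m)) with (mutL (kidx m) (Bseq m) (Lseq m)) by reflexivity.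
    unfold kidx. rewrite even_S, Nat2Z.inj_succ. unfold Z.succ.
    assert (Hz : 0 <= Z.of_nat m) by lia.
    destruct IH as [[He [HB [HL Hk]]]|[He [HB [HL Hk]]]]; rewrite He, HB, HL; cbn [negb].
    + right. rewrite mutB_E, mutL_E by auto. repeat split; auto.
    + left. rewrite mutB_O, mutL_O by auto. repeat split; auto.
Qed.

Instance tpow_proper : Proper (teq ==> eq ==> teq) tpow.
Proof. intros t t2 H n n2 <-. induction n; simpl; [reflexivity|]. apply tmul_proper; auto. Qed.

Lemma mul_one_l t : tmul tone t ≈ t.
Proof.
  intros k a. rewrite coeff_mul_l. unfold tone, M. cbn [zsum fold_right].
  replace (vsub a (0,0,0,0)) with a. 2:{ destruct a as [[[a0 a1] a2] a3]; simpl; apply vec_eq; lia. }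
  replace (bform Lambda0 (0,0,0,0) a) with 0.
  2:{ destruct a as [[[a0 a1] a2] a3]. unfold bform, sum4, vget, Lambda0. ring. }
  replace (k - 0 - 0) with k by ring. ring.
Qed.
Lemma mul_one_r t : tmul t tone ≈ t.
Proof.
  intros k a. rewrite coeff_mul_r. unfold tone, M. cbn [zsum fold_right].
  replace (vsub a (0,0,0,0)) with a. 2:{ destruct a as [[[a0 a1] a2] a3]; simpl; apply vec_eq; lia. }
  replace (bform Lambda0 a (0,0,0,0)) with 0.
  2:{ destruct a as [[[a0 a1] a2] a3]. unfold bform, sum4, vget, Lambda0. ring. }
  replace (k - 0 - 0) with k by ring. ring.
Qed.

Lemma tpow_y1 n : tpow y1 n ≈ M (0,0,Z.of_nat n,0).
Proof.
  induction n; [reflexivity|]. change (tpow y1 (S n)) with (tmul y1 (tpow y1 n)). rewrite IHn. unfold y1, M, tmul. cbn [flat_map map app].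
  apply single_eq; [ring| |unfold vadd; apply vec_eq; lia].
  unfold bform, sum4, vget, Lambda0. ring.
Qed.
Lemma tpow_y2 n : tpow y2 n ≈ M (0,0,0,Z.of_nat n).
Proof.
  induction n; [reflexivity|]. change (tpow y2 (S n)) with (tmul y2 (tpow y2 n)). rewrite IHn. unfold y2, M, tmul. cbn [flat_map map app].
  apply single_eq; [ring| |unfold vadd; apply vec_eq; lia].
  unfold bform, sum4, vget, Lambda0. ring.
Qed.

Lemma tpow2 t : tpow t 2 ≈ tmul t t.
Proof. change (tpow t 2) with (tmul t (tmul t tone)). rewrite mul_one_r. reflexivity. Qed.

Lemma y_part (X : nat -> tor) (L : nat -> nat -> Z) z : 0 <= z -> X 2%nat ≈ y1 -> X 3%nat ≈ y2 -> L 2%nat 3%nat = -2 ->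
  frame X L (0,0,z+1,z) ≈ M (0,0,z+1,z).
Proof.
  intros Hz H2 H3 HL. unfold frame. cbn [vget tpow]. 
  rewrite H2, H3, tpow_y1, tpow_y2, !mul_one_l, !Z2Nat.id by lia.
  unfold M, tmul, tscale. cbn [flat_map map app].
  apply single_eq; [ring| |unfold vadd; apply vec_eq; lia].
  cbv beta iota delta [sum4 bform vget Lambda0 Nat.ltb Nat.leb]. rewrite HL. ring.
Qed.

Lemma x_part1 (X : nat -> tor) (L : nat -> nat -> Z) : frame X L (0,2,0,0) ≈ tmul (X 1%nat) (X 1%nat).
Proof.
  unfold frame. cbn [vget Z.to_nat Pos.to_nat Pos.iter_op Nat.add].
  change (tpow (X 0%nat) 0) with tone. change (tpow (X 2%nat) 0) with tone. change (tpow (X 3%nat) 0) with tone.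
  rewrite !mul_one_l, mul_one_r, tpow2.
  replace (- _) with 0. { apply scale_0. }
  cbv beta iota delta [sum4 vget Nat.ltb Nat.leb]. ring.
Qed.
Lemma x_part0 (X : nat -> tor) (L : nat -> nat -> Z) : frame X L (2,0,0,0) ≈ tmul (X 0%nat) (X 0%nat).
Proof.
  unfold frame. cbn [vget Z.to_nat Pos.to_nat Pos.iter_op Nat.add].
  change (tpow (X 1%nat) 0) with tone. change (tpow (X 2%nat) 0) with tone. change (tpow (X 3%nat) 0) with tone.
  rewrite !mul_one_l, mul_one_r, tpow2.
  replace (- _) with 0. { apply scale_0. }
  cbv beta iota delta [sum4 vget Nat.ltb Nat.leb]. ring.
Qed.

Lemma rhs_even (X : nat -> tor) z : 0 <= z -> X 2%nat ≈ y1 -> X 3%nat ≈ y2 ->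
  exch_rhs X (BE z) (LE z) 0 ≈ tadd (tscale 1 (M (0,0,z+1,z))) (tmul (X 1%nat) (X 1%nat)).
Proof.
  intros Hz H2 H3. unfold exch_rhs. cbv zeta.
  replace (vec_of (fun i => Z.max 0 (BE z i 0))) with ((0,0,z+1,z) : vec)
    by (unfold vec_of; cbn [BE]; apply vec_eq; lia).
  replace (vec_of (fun i => Z.max 0 (- BE z i 0))) with ((0,2,0,0) : vec)
    by (unfold vec_of; cbn [BE]; apply vec_eq; lia).
  rewrite y_part, x_part1 by auto.
  replace (bform (LE z) (0,2,0,0) (vunit 0)) with 0 by (cbv beta iota delta [bform sum4 vget vunit vec_of LE Nat.eqb]; ring).
  replace (bform (LE z) (0,0,z+1,z) (vunit 0)) with 1 by (cbv beta iota delta [bform sum4 vget vunit vec_of LE Nat.eqb]; ring).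
  rewrite scale_0. reflexivity.
Qed.

Lemma rhs_odd (X : nat -> tor) z : 0 <= z -> X 2%nat ≈ y1 -> X 3%nat ≈ y2 ->
  exch_rhs X (BO z) (LO z) 1 ≈ tadd (tscale 1 (M (0,0,z+1,z))) (tmul (X 0%nat) (X 0%nat)).
Proof.
  intros Hz H2 H3. unfold exch_rhs. cbv zeta.
  replace (vec_of (fun i => Z.max 0 (BO z i 1))) with ((0,0,z+1,z) : vec)
    by (unfold vec_of; cbn [BO]; apply vec_eq; lia).
  replace (vec_of (fun i => Z.max 0 (- BO z i 1))) with ((2,0,0,0) : vec)
    by (unfold vec_of; cbn [BO]; apply vec_eq; lia).
  rewrite y_part, x_part0 by auto.
  replace (bform (LO z) (2,0,0,0) (vunit 1)) with 0 by (cbv beta iota delta [bform sum4 vget vunit vec_of LO Nat.eqb]; ring).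
  replace (bform (LO z) (0,0,z+1,z) (vunit 1)) with 1 by (cbv beta iota delta [bform sum4 vget vunit vec_of LO Nat.eqb]; ring).
  rewrite scale_0. reflexivity.
Qed.

Lemma frame_proper X X' L c : (forall i, (i < 4)%nat -> X i ≈ X' i) -> frame X L c ≈ frame X' L c.
Proof.
  intros H. unfold frame.
  rewrite (H 0%nat), (H 1%nat), (H 2%nat), (H 3%nat) by lia. reflexivity.
Qed.

Lemma rhs_proper X X' B L k : (forall i, (i < 4)%nat -> X i ≈ X' i) ->
  exch_rhs X B L k ≈ exch_rhs X' B L k.
Proof.
  intros H. unfold exch_rhs. cbv zeta. rewrite !(frame_proper X X') by auto. reflexivity.
Qed.

Definition Xc (m i : nat) : tor :=
  if Nat.eqb i 2 then y1 else if Nat.eqb i 3 then y2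
  else if Nat.eqb i (kidx m) then Yv m else Yv (S m).

Lemma kidx_cases m : (kidx m = 0 /\ kidx (S m) = 1)%nat \/ (kidx m = 1 /\ kidx (S m) = 0)%nat.
Proof. unfold kidx. rewrite even_S. destruct (Nat.even m); simpl; auto. Qed.

Lemma Xc_k m : Xc m (kidx m) = Yv m.
Proof. unfold Xc. destruct (kidx_cases m) as [[H _]|[H _]]; rewrite H; reflexivity. Qed.
Lemma Xc_Sk m : Xc (S m) (kidx m) = Yv (S (S m)).
Proof. unfold Xc. destruct (kidx_cases m) as [[H H']|[H H']]; rewrite H, H'; reflexivity. Qed.

Lemma rhs_Xc m : exch_rhs (Xc m) (Bseq m) (Lseq m) (kidx m) ≈ tadd (Pm m) (tmul (Yv (S m)) (Yv (S m))).
Proof.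
  unfold Pm.
  destruct (closed_forms m) as [[He [HB [HL Hk]]]|[He [HB [HL Hk]]]]; rewrite HB, HL, Hk.
  - rewrite rhs_even by (reflexivity || lia). unfold Xc. rewrite Hk. reflexivity.
  - rewrite rhs_odd by (reflexivity || lia). unfold Xc. rewrite Hk. reflexivity.
Qed.

Lemma Xc_valid : valid_seq Xc.
Proof.
  split.
  - intros i Hi. idx i; try reflexivity; lia.
  - intros m. split.
    + intros i Hi Hne. unfold Xc.
      destruct (kidx_cases m) as [[H H']|[H H']]; rewrite H, H' in *;
      idx i; try reflexivity; try lia.
    + rewrite Xc_k, Xc_Sk, rhs_Xc. apply EY.
Qed.

Lemma sub_zero A B : tadd A (tneg B) ≈ tzero -> A ≈ B.
Proof. intros H k a. specialize (H k a). rewrite coeff_add, coeff_neg in H. simpl in H. lia. Qed.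

Lemma unique X : valid_seq X -> forall m i, (i < 4)%nat -> X m i ≈ Xc m i.
Proof.
  intros [H0 HS] m. induction m as [|m IH]; intros i Hi.
  - rewrite H0 by auto. idx i; try reflexivity; lia.
  - destruct (HS m) as [Hkeep Hex].
    destruct Xc_valid as [_ HSc]. destruct (HSc m) as [Hkeepc _].
    destruct (Nat.eq_dec i (kidx m)) as [->|Hne].
    + rewrite Xc_Sk. apply sub_zero. apply (dom (Yv m)); [apply Yv_nz|].
      rewrite mul_add_l, mul_neg_l.
      assert (Hk4 : (kidx m < 4)%nat) by (unfold kidx; destruct (Nat.even m); lia).
      assert (E1 : tmul (X (S m) (kidx m)) (Yv m) ≈ tmul (Yv (S (S m))) (Yv m)).
      { transitivity (tmul (X (S m) (kidx m)) (X m (kidx m))).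
        { rewrite (IH _ Hk4), Xc_k. reflexivity. }
        rewrite Hex, (rhs_proper (X m) (Xc m)) by auto.
        rewrite rhs_Xc. symmetry. apply EY. }
      rewrite E1. intros k a. rewrite coeff_add, coeff_neg. simpl. lia.
    + rewrite Hkeep, IH, Hkeepc by auto. reflexivity.
Qed.

Lemma xvar_Yv X : valid_seq X -> forall n, xvar X (S n) ≈ Yv n.
Proof.
  intros HX n. destruct n as [|[|n]]; simpl xvar.
  - rewrite (unique X HX 0 0) by lia. reflexivity.
  - rewrite (unique X HX 0 1) by lia. reflexivity.
  - rewrite (unique X HX (S n) (kidx n)) by (unfold kidx; destruct (Nat.even n); lia).
    rewrite Xc_Sk. reflexivity.
Qed.

Lemma y1y2 : tmul y1 y2 ≈ tscale (-2) Wm.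
Proof. apply teqb_sound. vm_compute. reflexivity. Qed.

Theorem mainTheorem6 :
  (exists X, valid_seq X) /\
  forall X : nat -> nat -> tor, valid_seq X ->
  forall n : nat, (2 <= n)%nat ->
    teq (tmul (xvar X n) s1)
        (tadd (xvar X (S n)) (tscale 2 (tmul (tmul (xvar X (n - 1)) y1) y2))).
Proof.
  split.
  - exists Xc. apply Xc_valid.
  - intros X HX n Hn. destruct n as [|[|p]]; try lia.
    replace (S (S p) - 1)%nat with (S p) by lia.
    rewrite !(xvar_Yv X HX).
    rewrite Yv_SS, mul_assoc, y1y2, mul_scale_r, scale_scale. change (-2 + 2) with 0. rewrite scale_0.
    cf_close.
Qed.
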